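(* Let $X$ be a set. For every perfect map $f\colon\mathbb{V}^{\downarrow}(([0,1]^{\downarrow})^X)\to[0,1]^{\downarrow}$ there exist an at most countable set $Y$, a perfect map $s\colon([0,1]^{\downarrow})^Y\to[0,1]^{\downarrow}$ and a family $(h_y\colon([0,1]^{\downarrow})^X\to[0,1]^{\downarrow})_{y\in Y}$ of perfect maps such that $f=s\circ\langle\Diamond\circ\mathbb{V}^{\downarrow}h_y\rangle_{y\in Y}$.
   Context: A stably compact space is a $T_0$ space that is compact, locally compact, coherent (intersection of two compact saturated sets is compact) and well-filtered; a perfect map is a continuous map such that preimages of compact saturated sets are compact saturated. The order on such a space is the specialization order; $\downarrow$ denotes down-closure. $[0,1]^{\downarrow}$ is the set $[0,1]$ with the topology of Euclidean-open downsets, and $([0,1]^{\downarrow})^X$ carries the product topology (a stably compact space). For a stably compact $Z$, $\mathbb{V}^{\downarrow}Z$ is the set of closed subsets of $Z$ with topology generated by $\{C\mid C\cap U\neq\varnothing\}$ ($U$ open), and $\mathbb{V}^{\downarrow}h(C)=\downarrow h[C]$. $\Diamond\colon\mathbb{V}^{\downarrow}([0,1]^{\downarrow})\to[0,1]^{\downarrow}$ is $A\mapsto\sup A$ (with $\sup\varnothing=0$). $\langle g_y\rangle_{y\in Y}$ denotes the induced map into the product. *)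

(* Defs.v *)
From HB Require Import structures.
From mathcomp Require Import all_boot all_order all_algebra.
From mathcomp Require Import mathcomp_extra boolp classical_sets functions cardinality reals.
Set Implicit Arguments. Unset Strict Implicit. Unset Printing Implicit Defensive.
Import Order.TTheory GRing.Theory Num.Theory.
Local Open Scope classical_set_scope.
Local Open Scope ring_scope.

Section Topology.
Context {T : Type}.

Definition closed_in (op : set (set T)) (C : set T) : Prop := op (~` C).

Definition spec_le (op : set (set T)) (x y : T) : Prop :=
  forall U, op U -> U x -> U y.

Definition down (op : set (set T)) (A : set T) : set T :=
  [set x | exists2 y, A y & spec_le op x y].

Definition saturated (op : set (set T)) (A : set T) : Prop :=
  forall x, (forall U, op U -> A `<=` U -> U x) -> A x.

Definition compact_in (op : set (set T)) (A : set T) : Prop :=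
  forall G : set (set T), G `<=` op -> A `<=` \bigcup_(U in G) U ->
    exists G' : set (set T),
      [/\ finite_set G', G' `<=` G & A `<=` \bigcup_(U in G') U].

Definition gen_opens (S : set (set T)) : set (set T) :=
  fun U => forall x, U x ->
    exists F : set (set T),
      [/\ finite_set F, F `<=` S, (forall V, F V -> V x) &
          \bigcap_(V in F) V `<=` U].

End Topology.

Section Maps.
Context {T1 T2 : Type}.

Definition continuous_map (op1 : set (set T1)) (op2 : set (set T2))
  (f : T1 -> T2) : Prop :=
  forall V, op2 V -> op1 (f @^-1` V).

Definition perfect (op1 : set (set T1)) (op2 : set (set T2)) (f : T1 -> T2) :
  Prop :=
  continuous_map op1 op2 f /\
  forall K, compact_in op2 K -> saturated op2 K ->
    compact_in op1 (f @^-1` K) /\ saturated op1 (f @^-1` K).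

End Maps.

Definition prod_opens (X T : Type) (op : set (set T)) : set (set (X -> T)) :=
  gen_opens [set W | exists (x : X) (U : set T), op U /\
                       W = (fun g : X -> T => g x) @^-1` U].

Arguments prod_opens X {T} op.

Definition Vdown (T : Type) (op : set (set T)) := {C : set T | closed_in op C}.

Definition Vdown_opens (T : Type) (op : set (set T)) : set (set (Vdown op)) :=
  gen_opens [set W | exists U : set T, op U /\
                       W = [set C : Vdown op | proj1_sig C `&` U !=set0]].

Arguments Vdown_opens {T} op.

Definition Vdown_map (T1 T2 : Type) (op2 : set (set T2)) (h : T1 -> T2)
  (C : set T1) : set T2 := down op2 (h @` C).

Definition I01 (R : realType) := {x : R | 0 <= x <= 1}.

(* [0,1]^down: the topology of Euclidean-open sets that are closed under
   going up in the real order, so that the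
   specialization order is the usual order, closed sets are down-sets and
   Diamond = sup is continuous. *)
Definition I01_opens (R : realType) : set (set (I01 R)) :=
  fun U =>
    (forall x y : I01 R, U x -> proj1_sig x <= proj1_sig y -> U y) /\
    (forall x : I01 R, U x -> exists2 e : R, 0 < e &
       forall y : I01 R, `|proj1_sig y - proj1_sig x| < e -> U y).

Arguments I01_opens : clear implicits.

Lemma sup_I01 (R : realType) (A : set (I01 R)) :
  0 <= sup ((fun x : I01 R => proj1_sig x) @` A) <= 1.
Proof.
set E := (fun x : I01 R => proj1_sig x) @` A.
have [->|nE] := eqVneq E set0; first by rewrite sup0 lexx ler01.
have ne : E !=set0 by apply/set0P.
have ub : ubound E 1 by move=> _ [x _ <-]; case: x => /= x /andP[].
apply/andP; split; last exact: ge_sup.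
case: ne => r Er; have := Er; case=> x _ xr.
have r0 : 0 <= r by rewrite -xr; case: x {xr} => /= x /andP[].
apply: (le_trans r0); apply: (sup_upper_bound (E := E)) => //.
by split; [by exists r | exists 1].
Qed.

(* Diamond : V^down([0,1]^down) -> [0,1]^down, A |-> sup A (sup of empty = 0),
   defined on arbitrary subsets of [0,1] *)
Definition Diamond (R : realType) (A : set (I01 R)) : I01 R :=
  exist _ (sup ((fun x : I01 R => proj1_sig x) @` A)) (sup_I01 A).

(* Main.v *)
Require Import Defs.
From HB Require Import structures.
From mathcomp Require Import all_boot all_order all_algebra.
From mathcomp Require Import mathcomp_extra boolp classical_sets functions cardinality reals.
From mathcomp Require Import finmap topology normedtype.
From mathcomp Require Import ring lra.
Set Implicit Arguments. Unset Strict Implicit. Unset Printing Implicit Defensive.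
Import Order.TTheory GRing.Theory Num.Theory.
Local Open Scope classical_set_scope.
Local Open Scope ring_scope.
Import numFieldNormedType.Exports.
Section Basics.
Context {R : realType}.
Local Notation I := (I01 R).

Definition iv (x : I) : R := proj1_sig x.
Lemma iv_ge0 (x : I) : 0 <= iv x. Proof. by case: x => /= r /andP[]. Qed.
Lemma iv_le1 (x : I) : iv x <= 1. Proof. by case: x => /= r /andP[]. Qed.
Lemma iv_inj (x y : I) : iv x = iv y -> x = y.
Proof.
case: x => x px; case: y => y py /= e; subst y.
by congr exist; apply: bool_irrelevance.
Qed.

Definition cl01 (r : R) : R := Num.max 0 (Num.min r 1).
Lemma cl01_itv r : 0 <= cl01 r <= 1.
Proof. apply/andP; split; [by rewrite /cl01 le_max lexx | by rewrite /cl01 ge_max ler01 ge_min lexx orbT]. Qed.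
Definition mkI (r : R) : I := exist _ (cl01 r) (cl01_itv r).
Lemma iv_mkI r : iv (mkI r) = cl01 r. Proof. by []. Qed.
Lemma cl01_id r : 0 <= r <= 1 -> cl01 r = r.
Proof. by move=> /andP[h1 h2]; rewrite /cl01 (min_l h2) (max_r h1). Qed.
Lemma mkI_iv (x : I) : mkI (iv x) = x.
Proof. apply: iv_inj; rewrite iv_mkI cl01_id //; apply/andP; split; [exact: iv_ge0|exact: iv_le1]. Qed.

Lemma max_lip (c x y : R) : `|Num.max c x - Num.max c y| <= `|x - y|.
Proof.
case: (ltP c x) => h1; case: (ltP c y) => h2; rewrite ?subrr ?normr0 ?normr_ge0 //;
  (case: (lerP 0 (x - y)) => h5; [rewrite (ger0_norm h5)|rewrite (ltr0_norm h5)]);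
  rewrite ler_norml; apply/andP; split; lra.
Qed.
Lemma min_lip (c x y : R) : `|Num.min x c - Num.min y c| <= `|x - y|.
Proof.
case: (ltP x c) => h1; case: (ltP y c) => h2; rewrite ?subrr ?normr0 ?normr_ge0 //;
  (case: (lerP 0 (x - y)) => h5; [rewrite (ger0_norm h5)|rewrite (ltr0_norm h5)]);
  rewrite ler_norml; apply/andP; split; lra.
Qed.
Lemma cl01_lip a b : `|cl01 a - cl01 b| <= `|a - b|.
Proof. exact: le_trans (max_lip _ _ _) (min_lip _ _ _). Qed.

Lemma min_near (a b a' b' e : R) : `|a' - a| < e -> `|b' - b| < e ->
  `|Num.min a' b' - Num.min a b| < e.
Proof.
rewrite !ltr_norml => /andP[h1 h2] /andP[h3 h4].
case: (ltP a b) => h5; case: (ltP a' b') => h6; apply/andP; split; lra.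
Qed.
Lemma max_near (a b a' b' e : R) : `|a' - a| < e -> `|b' - b| < e ->
  `|Num.max a' b' - Num.max a b| < e.
Proof.
rewrite !ltr_norml => /andP[h1 h2] /andP[h3 h4].
case: (ltP a b) => h5; case: (ltP a' b') => h6; apply/andP; split; lra.
Qed.

Definition pt_le {Y : Type} (g g' : Y -> I) := forall y, iv (g y) <= iv (g' y).
Definition near_in {Y : Type} (L : seq Y) (d : R) (g g' : Y -> I) :=
  forall y, List.In y L -> `|iv (g' y) - iv (g y)| < d.
Definition good {Y : Type} (phi : (Y -> I) -> R) :=
  (forall g g', pt_le g g' -> phi g <= phi g') /\
  (forall g e, 0 < e -> exists L d, 0 < d /\
     forall g', near_in L d g g' -> `|phi g' - phi g| < e).

Lemma near_in_app {Y : Type} (L1 L2 : seq Y) d1 d2 g g' :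
  near_in (L1 ++ L2) (Num.min d1 d2) g g' -> near_in L1 d1 g g' /\ near_in L2 d2 g g'.
Proof.
move=> h; split => y hy.
  have := h y (List.in_or_app _ _ _ (or_introl hy)); rewrite lt_min => /andP[] //.
have := h y (List.in_or_app _ _ _ (or_intror hy)); rewrite lt_min => /andP[] //.
Qed.

Lemma good_cst {Y : Type} (c : R) : good (fun _ : Y -> I => c).
Proof.
split => // g e e0; exists [::], 1; split => // g' _; by rewrite subrr normr0.
Qed.

Lemma good_coord {Y : Type} (y : Y) : good (fun g : Y -> I => iv (g y)).
Proof.
split => [g g' h|g e e0]; first exact: h.
exists [:: y], e; split => // g' h; apply: h; by left.
Qed.

Lemma good_addc {Y : Type} (phi : (Y -> I) -> R) c : good phi -> good (fun g => phi g + c).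
Proof.
move=> [m ct]; split => [g g' h|g e e0]; first by rewrite lerD2r; exact: m.
have [L [d [d0 hd]]] := ct g e e0; exists L, d; split => // g' h.
have -> : phi g' + c - (phi g + c) = phi g' - phi g by ring.
exact: hd.
Qed.

Lemma good_scale {Y : Type} (phi : (Y -> I) -> R) c : 0 <= c -> good phi -> good (fun g => c * phi g).
Proof.
move=> c0 [m ct]; split => [g g' h|g e e0]; first by rewrite ler_wpM2l //; exact: m.
have c1 : 0 < c + 1 by lra.
have [L [d [d0 hd]]] := ct g (e / (c + 1)) (divr_gt0 e0 c1); exists L, d; split => // g' h.
rewrite -mulrBr normrM (ger0_norm c0).
have := hd g' h => hh.
have hh' : c * `|phi g' - phi g| <= c * (e / (c + 1)) by rewrite ler_wpM2l // ltW.
apply: (le_lt_trans hh').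
rewrite mulrA ltr_pdivrMr //; nra.
Qed.

Lemma good_min {Y : Type} (phi psi : (Y -> I) -> R) :
  good phi -> good psi -> good (fun g => Num.min (phi g) (psi g)).
Proof.
move=> [m1 c1] [m2 c2]; split => [g g' h|g e e0].
  rewrite le_min !ge_min (m1 _ _ h) (m2 _ _ h) ?orbT //.
have [L1 [d1 [d10 h1]]] := c1 g e e0; have [L2 [d2 [d20 h2]]] := c2 g e e0.
exists (L1 ++ L2), (Num.min d1 d2); split; first by rewrite lt_min d10 d20.
move=> g' /near_in_app [n1 n2]; apply: min_near; [exact: h1|exact: h2].
Qed.

Lemma good_max {Y : Type} (phi psi : (Y -> I) -> R) :
  good phi -> good psi -> good (fun g => Num.max (phi g) (psi g)).
Proof.
move=> [m1 c1] [m2 c2]; split => [g g' h|g e e0].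
  rewrite ge_max !le_max (m1 _ _ h) (m2 _ _ h) ?orbT //.
have [L1 [d1 [d10 h1]]] := c1 g e e0; have [L2 [d2 [d20 h2]]] := c2 g e e0.
exists (L1 ++ L2), (Num.min d1 d2); split; first by rewrite lt_min d10 d20.
move=> g' /near_in_app [n1 n2]; apply: max_near; [exact: h1|exact: h2].
Qed.

End Basics.
Section ListSets.

Definition lset {A : Type} (L : seq A) : set A := [set a | List.In a L].

Lemma finite_lset {A : Type} (L : seq A) : finite_set (lset L).
Proof.
elim: L => [|a L IH].
  have -> : lset (@nil A) = set0 by apply/seteqP; split => x //=.
  exact: finite_set0.
have -> : lset (a :: L) = [set a] `|` lset L.
  by apply/seteqP; split => x /= [h|h]; [left|right|left|right].
by rewrite finite_setU; split => //; exact: finite_set1.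
Qed.

Lemma in_classic {A : Type} (s : seq {classic A}) (x : {classic A}) : (x \in s) <-> List.In x s.
Proof.
elim: s => [|a s IH]; first by split.
rewrite in_cons /=; split.
  by case/orP => [/eqP ->|/IH h]; [left|right].
by case => [->|/IH ->]; rewrite ?eqxx ?orbT.
Qed.

Lemma finite_list {A : Type} (F : set A) : finite_set F ->
  exists L : seq A, forall x, F x <-> List.In x L.
Proof.
move=> fF; have fF' : finite_set (F : set {classic A}) by [].
have [s hs] := (finite_seqP (F : set {classic A})).1 fF'.
exists s => x; rewrite -in_classic; split.
  by move=> Fx; have : [set` s] x by rewrite -hs.
by move=> xs; rewrite hs.
Qed.

Lemma list_choice {A B : Type} (Rl : A -> B -> Prop) (L : seq A) :
  (forall a, List.In a L -> exists b, Rl a b) ->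
  exists M : seq B, (forall b, List.In b M -> exists2 a, List.In a L & Rl a b) /\
     (forall a, List.In a L -> exists2 b, List.In b M & Rl a b).
Proof.
elim: L => [|a L IH] h; first by exists [::]; split.
have [b hb] := h a (or_introl erefl).
have [M [h1 h2]] := IH (fun a' ha' => h a' (or_intror ha')).
exists (b :: M); split.
  move=> b' [<-|hb']; first by exists a => //; left.
  by have [a' ? ?] := h1 b' hb'; exists a' => //; right.
move=> a' [<-|ha']; first by exists b => //; left.
by have [b' ? ?] := h2 a' ha'; exists b' => //; right.
Qed.

End ListSets.

Section Topo.
Context {R : realType}.
Local Notation I := (I01 R).

Lemma I_up (c : R) : I01_opens R [set x : I | c < iv x].
Proof.
split => [x y /= h1 h2|x /= h]; first exact: lt_le_trans h1 h2.
exists (iv x - c); first by rewrite subr_gt0.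
move=> y /=; rewrite ltr_norml => /andP[h1 h2]; rewrite /iv in h1 h2 h *; lra.
Qed.

Definition subb (Y : Type) : set (set (Y -> I)) :=
  [set W | exists (x : Y) (U : set I), I01_opens R U /\
                       W = (fun g : Y -> I => g x) @^-1` U].

Lemma open_of_lists (Y : Type) (U : set (Y -> I)) :
  (forall g, U g -> exists L : seq (Y * R),
     (forall p, List.In p L -> p.2 < iv (g p.1)) /\
     (forall g', (forall p, List.In p L -> p.2 < iv (g' p.1)) -> U g')) ->
  prod_opens Y (I01_opens R) U.
Proof.
move=> hU g Ug; have [L [h1 h2]] := hU g Ug.
exists ((fun p => (fun h : Y -> I => h p.1) @^-1` [set x : I | p.2 < iv x]) @` lset L).
split.
- exact/finite_image/finite_lset.
- move=> W [p Lp <-]; exists p.1, [set x : I | p.2 < iv x]; split => //; exact: I_up.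
- move=> W [p Lp <-]; exact: h1.
- move=> g' hg'; apply: h2 => p Lp; exact: (hg' _ (ex_intro2 _ _ p Lp erefl)).
Qed.

Lemma prod_open_up (Y : Type) (U : set (Y -> I)) g g' :
  prod_opens Y (I01_opens R) U -> U g -> pt_le g g' -> U g'.
Proof.
move=> oU Ug le; have [F [_ sF gF FU]] := oU g Ug.
apply: FU => V FV; have [y [W [[Wup _] eV]]] := sF V FV.
have gV := gF V FV; rewrite eV in gV *; exact: Wup _ _ gV (le y).
Qed.

End Topo.
Section TopoI.
Context {R : realType}.
Local Notation I := (I01 R).

Lemma spec_I (x y : I) : spec_le (I01_opens R) x y -> iv x <= iv y.
Proof.
move=> h; rewrite leNgt; apply/negP => lt.
have := h _ (I_up (iv y)) lt; rewrite /= ltxx; done.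
Qed.

Lemma lev_I01 (a : R) : compact_in (I01_opens R) [set x : I | a <= iv x] /\
  saturated (I01_opens R) [set x : I | a <= iv x].
Proof.
split.
  move=> G sG cov; case: (leP a 1) => a1.
    have ma : a <= iv (mkI a) by change (a <= cl01 a); rewrite /cl01 (min_l a1) le_max lexx orbT.
    have [U GU Um] := cov _ ma.
    exists [set U]; split; [exact: finite_set1| by move=> V; rewrite /set1 /= => ->|].
    move=> x hx; exists U => //; apply: (proj1 (sG U GU)) Um _.
    by change (cl01 a <= iv x); rewrite /cl01 (min_l a1) ge_max iv_ge0.
  exists set0; split; [exact: finite_set0|by []|].
  by move=> x /= hx; have := iv_le1 x; lra.
move=> x hx; rewrite /= leNgt; apply/negP => lt.
suff : iv x < iv x by rewrite ltxx.
apply: (hx [set y : I | iv x < iv y] (I_up (iv x))) => y /= hy; lra.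
Qed.

Lemma min_bound (a : R) (L : seq (set I)) :
  (forall W, List.In W L -> exists2 c, a < c & W = [set x : I | c < iv x]) ->
  exists2 b, a < b & forall W, List.In W L -> W `<=` [set x : I | b < iv x].
Proof.
elim: L => [|W L IH] h; first by exists (a + 1) => //; lra.
have [c ac ->] := h W (or_introl erefl).
have [b ab hb] := IH (fun W' hW' => h W' (or_intror hW')).
exists (Num.min c b); first by rewrite lt_min ac ab.
move=> W' [<-|hW'] x /= hx.
  by apply: le_lt_trans hx; rewrite ge_min lexx.
by have := hb W' hW' x hx; apply: le_lt_trans; rewrite ge_min lexx orbT.
Qed.

Lemma cs_I01 (K : set I) : compact_in (I01_opens R) K -> saturated (I01_opens R) K ->
  exists a : R, K = [set x : I | a <= iv x].
Proof.
move=> cK sK; case: (pselect (K !=set0)) => [[k0 Kk0]|nK]; last first.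
  exists 2; apply/seteqP; split => x /= hx; first by exfalso; apply: nK; exists x.
  by have := iv_le1 x; lra.
set E := iv @` K.
have E0 : E !=set0 by exists (iv k0); exists k0.
have Elb : has_lbound E by exists 0 => _ [x _ <-]; exact: iv_ge0.
set a := inf E.
have aK : exists2 m, K m & iv m = a.
  apply: contrapT => nm.
  have Kgt : forall m, K m -> a < iv m.
    move=> m Km; rewrite lt_neqAle (ge_inf Elb); last by exists m.
    by rewrite andbT; apply/eqP => e; apply: nm; exists m.
  set G := (fun c => [set x : I | c < iv x]) @` [set c | a < c].
  have Gop : G `<=` I01_opens R by move=> W [c _ <-]; exact: I_up.
  have Gcov : K `<=` \bigcup_(U in G) U.
    move=> m Km; exists [set x : I | (a + iv m) / 2 < iv x].
      by exists ((a + iv m) / 2) => //=; have := Kgt m Km; lra.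
    by rewrite /=; have := Kgt m Km; lra.
  have [G' [fG' sG' cG']] := cK G Gop Gcov.
  have [LG hLG] := finite_list fG'.
  have [b ab hb] : exists2 b, a < b & forall W, List.In W LG -> W `<=` [set x : I | b < iv x].
    apply: min_bound => W /hLG /sG' [c ac <-]; by exists c.
  have : b <= a.
    rewrite /a; apply: (lb_le_inf E0) => _ [x Kx <-].
    have [W G'W Wx] := cG' x Kx; exact/ltW/(hb W ((hLG W).1 G'W) x Wx).
  lra.
have [m Km ma] := aK.
exists a; apply/seteqP; split => x /= hx.
  by rewrite /a; apply: (ge_inf Elb); exists x.
apply: sK => U oU KU; apply: (proj1 oU) (KU m Km) _; by change (iv m <= iv x); rewrite ma.
Qed.

End TopoI.
Section Perf.
Context {R : realType}.
Local Notation I := (I01 R).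

Definition minI (a b : I) : I := if iv a <= iv b then a else b.

Lemma good_lsc (Y : Type) (psi : (Y -> I) -> R) g t : good psi -> t < psi g ->
  exists L : seq (Y * R), (forall p, List.In p L -> p.2 < iv (g p.1)) /\
     (forall g', (forall p, List.In p L -> p.2 < iv (g' p.1)) -> t < psi g').
Proof.
move=> [m ct] lt; have e0 : 0 < psi g - t by rewrite subr_gt0.
have [L0 [d [d0 hd]]] := ct g _ e0.
exists (map (fun y => (y, iv (g y) - d)) L0); split.
  move=> p /List.in_map_iff [y [<- _]] /=; lra.
move=> g' hg'.
pose g'' := fun y => minI (g' y) (g y).
have n'' : near_in L0 d g g''.
  move=> y Ly; have := hg' (y, iv (g y) - d) (List.in_map _ _ _ Ly) => /= h.
  rewrite /g'' /minI; case: ifP => c.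
    by rewrite ltr_norml; apply/andP; split; lra.
  by rewrite subrr normr0.
have le'' : pt_le g'' g'.
  move=> y; rewrite /g'' /minI; case: ifP => c //; move/negbT: c; rewrite -ltNge => c; exact: ltW.
have := hd g'' n''; rewrite ltr_norml => /andP[h1 _].
have := m _ _ le''; lra.
Qed.

Lemma cont_lsc (Y : Type) (phi : (Y -> I) -> I) :
  (forall g t, t < iv (phi g) -> exists L : seq (Y * R),
     (forall p, List.In p L -> p.2 < iv (g p.1)) /\
     (forall g', (forall p, List.In p L -> p.2 < iv (g' p.1)) -> t < iv (phi g'))) ->
  continuous_map (prod_opens Y (I01_opens R)) (I01_opens R) phi.
Proof.
move=> H V [Vup Vop]; apply: open_of_lists => g Vg.
have [e e0 he] := Vop _ Vg.
have lt0 : iv (phi g) - e < iv (phi g) by lra.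
have [L [h1 h2]] := H g (iv (phi g) - e) lt0.
exists L; split => // g' hg'; have lt := h2 g' hg'.
case: (leP (iv (phi g)) (iv (phi g'))) => c; first exact: Vup _ _ Vg c.
apply: he; change (`|iv (phi g') - iv (phi g)| < e).
rewrite ltr_norml; apply/andP; split; lra.
Qed.

Lemma sat_lev (Y : Type) (phi : (Y -> I) -> I) (a : R) :
  (forall g g', pt_le g g' -> iv (phi g) <= iv (phi g')) ->
  saturated (prod_opens Y (I01_opens R)) (phi @^-1` [set x : I | a <= iv x]).
Proof.
move=> m g hs; rewrite /= leNgt; apply/negP => lt.
pose U := [set g' : Y -> I | exists y, iv (g y) < iv (g' y)].
have oU : prod_opens Y (I01_opens R) U.
  apply: open_of_lists => g' [y hy]; exists [:: (y, iv (g y))]; split.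
    by move=> p [<-|//].
  by move=> g'' h; exists y; exact: (h _ (or_introl erefl)).
have KU : phi @^-1` [set x : I | a <= iv x] `<=` U.
  move=> g' /= hg'; apply: contrapT => nU.
  have le : pt_le g' g.
    move=> y; rewrite leNgt; apply/negP => c; apply: nU; by exists y.
  have := m _ _ le; lra.
have [y] := hs U oU KU; by rewrite ltxx.
Qed.

Local Notation PT Y := (prod_topology (fun _ : {classic Y} => R)).

Definition clampf {Y : Type} (g : Y -> R) : Y -> I := fun y => mkI (g y).

Lemma nbhs_near (Y : Type) (g : PT Y) (M : seq (Y * R)) :
  (forall p, List.In p M -> 0 < p.2) ->
  nbhs g [set g' : PT Y | forall p, List.In p M -> `|g' p.1 - g p.1| < p.2].
Proof.
elim: M => [|p M IH] hM.
  by apply: filterS filterT => g' _ p [].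
have := IH (fun q hq => hM q (or_intror hq)) => h2.
have h1 : nbhs g ((fun f : PT Y => f p.1) @^-1` ball (g p.1) p.2).
  apply: (@proj_continuous {classic Y} (fun _ => R) p.1 g).
  exact: nbhsx_ballx (hM p (or_introl erefl)).
apply: filterS (filterI h1 h2) => g' [/= b1 b2] q [<-|hq]; last exact: b2.
by move: b1; rewrite -ball_normE /ball_ /= distrC.
Qed.

Lemma open_pre (Y : Type) (U : set (Y -> I)) : prod_opens Y (I01_opens R) U ->
  open [set g : PT Y | U (clampf g)].
Proof.
move=> oU; rewrite openE => g /= Ug.
have [F [fF sF gF FU]] := oU _ Ug.
have [L hL] := finite_list fF.
have hV : forall V, List.In V L -> exists p : Y * R, 0 < p.2 /\
    forall g' : Y -> I, `|iv (g' p.1) - iv (clampf g p.1)| < p.2 -> V g'.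
  move=> V /(hL V).2 FV; have [y [W [[Wup Wop] eV]]] := sF V FV.
  have := gF V FV; rewrite eV /= => Wg; have [e e0 he] := Wop _ Wg.
  by exists (y, e); split => // g' hg'; exact: he.
have [M [hM1 hM2]] := list_choice hV.
apply: filterS (@nbhs_near Y g M _).
  move=> g' hg'; apply: FU => V FV; have [p Mp [_ hp]] := hM2 V ((hL V).1 FV).
  apply: hp; exact: le_lt_trans (cl01_lip _ _) (hg' p Mp).
by move=> p /hM1 [V _ [hp _]].
Qed.


End Perf.
HB.instance Definition _ (R : realType) (Y : Type) :=
  isPointed.Build (prod_topology (fun _ : {classic Y} => (R : topologicalType))) (fun _ => 0).

Section Perf2.
Context {R : realType}.
Local Notation I := (I01 R).
Local Notation PT Y := (prod_topology (fun _ : {classic Y} => R)).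

Lemma closed_good (Y : Type) (chi : (Y -> I) -> R) : good chi ->
  closed [set g : PT Y | 0 <= chi (clampf g)].
Proof.
move=> [m ct].
have oA : open [set g : PT Y | chi (clampf g) < 0].
  rewrite openE => g /= hg.
  have e0 : 0 < - chi (clampf g) by rewrite oppr_gt0.
  have [L [d [d0 hd]]] := ct (clampf g) _ e0.
  apply: filterS (@nbhs_near R Y g (map (fun y => (y, d)) L) _).
    move=> g' hg' /=.
    have : near_in L d (clampf g) (clampf g').
      move=> y Ly; have := hg' (y, d) (List.in_map _ _ _ Ly) => /= h.
      exact: le_lt_trans (cl01_lip _ _) h.
    move=> /hd; rewrite ltr_norml => /andP[_ h]; lra.
  by move=> p /List.in_map_iff [y [<- _]].
have -> : [set g : PT Y | 0 <= chi (clampf g)] = ~` [set g : PT Y | chi (clampf g) < 0].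
  by apply/seteqP; split => g /=; rewrite leNgt => /negP.
exact: open_closedC.
Qed.

Lemma compact_lev (Y : Type) (S : set (Y -> I)) (chi : nat -> (Y -> I) -> R) :
  (forall n, good (chi n)) -> (forall g, S g <-> forall n, 0 <= chi n g) ->
  compact_in (prod_opens Y (I01_opens R)) S.
Proof.
move=> gchi hS.
pose S' := [set g : PT Y | forall y, `[(0:R), 1]%classic (g y)] `&`
   \bigcap_(n in [set: nat]) [set g : PT Y | 0 <= chi n (clampf g)].
have cS' : compact S'.
  apply: compact_closedI.
    exact: (@tychonoff {classic Y} (fun _ => R) (fun _ => `[(0:R), 1]%classic) (fun _ => @segment_compact R 0 1)).
  by apply: closed_bigI => n _; exact: closed_good.
move=> G sG cov.
rewrite (@compact_cover (PT Y)) in cS'.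
have := cS' {classic (set (Y -> I))} G (fun U => [set g : PT Y | U (clampf g)]).
case.
- by move=> U GU; exact: open_pre (sG U GU).
- move=> g [_ hg]; have : S (clampf g) by apply/hS => n; exact: hg n Logic.I.
  move=> /cov [U GU hU]; by exists U.
move=> D' sD' cD'; exists ([set` D'] : set {classic set (Y -> I)}); split.
- exact: finite_fset.
- by move=> U /= hU; exact/set_mem/(sD' U hU).
move=> g Sg.
have eg : clampf (fun y : {classic Y} => iv (g y)) = g.
  by apply: funext => y; exact: mkI_iv.
have Sg0 : S' (fun y : {classic Y} => iv (g y)).
  split; first by move=> y; rewrite /= in_itv /= iv_ge0 iv_le1.
  move=> n _ /=; rewrite eg; exact: (hS g).1 Sg n.
have [U hU hUg] := cD' _ Sg0.
exists U => //; by rewrite -eg.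
Qed.

Lemma perfect_crit (Y : Type) (phi : (Y -> I) -> I) :
  (forall g g', pt_le g g' -> iv (phi g) <= iv (phi g')) ->
  (forall g t, t < iv (phi g) -> exists psi, [/\ good psi, t < psi g &
        forall g', psi g' <= iv (phi g')]) ->
  (forall a, exists chi : nat -> (Y -> I) -> R, (forall n, good (chi n)) /\
        forall g, a <= iv (phi g) <-> forall n, 0 <= chi n g) ->
  perfect (prod_opens Y (I01_opens R)) (I01_opens R) phi.
Proof.
move=> m lsc usc; split.
  apply: cont_lsc => g t lt; have [psi [gp tp hp]] := lsc g t lt.
  have [L [h1 h2]] := good_lsc gp tp.
  exists L; split => // g' hg'; exact: lt_le_trans (h2 g' hg') (hp g').
move=> K cK sK; have [a ->] := cs_I01 cK sK; split.
  have [chi [gc hc]] := usc a; exact: compact_lev gc hc.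
exact: sat_lev.
Qed.

End Perf2.
Section HFun.
Context {R : realType} {X : Type}.
Local Notation I := (I01 R).

Definition dpos (d : R) : R := if 0 < d then d else 1.
Lemma dpos_gt0 d : 0 < dpos d. Proof. by rewrite /dpos; case: ifP => // _; exact: ltr01. Qed.

Definition term (p : X * R * R) (g : X -> I) : R :=
  cl01 ((dpos p.2)^-1 * iv (g p.1.1) + (- (p.1.2 / dpos p.2))).

Definition hv (P : seq (X * R * R)) (g : X -> I) : R :=
  foldr (fun p acc => Num.min (term p g) acc) 1 P.

Lemma good_term p : good (term p).
Proof.
apply: good_max; first exact: good_cst.
apply: good_min; last exact: good_cst.
apply: good_addc; apply: good_scale; last exact: good_coord.
by rewrite invr_ge0 ltW // dpos_gt0.
Qed.

Lemma good_hv P : good (hv P).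
Proof.
elim: P => [|p P IH]; first exact: good_cst.
exact: good_min (good_term p) IH.
Qed.

Lemma hv_itv P g : 0 <= hv P g <= 1.
Proof.
elim: P => [|p P IH] /=; first by rewrite ler01 lexx.
have := cl01_itv ((dpos p.2)^-1 * iv (g p.1.1) + (- (p.1.2 / dpos p.2))).
rewrite /term => /andP[a1 a2]; move: IH => /andP[b1 b2].
by apply/andP; split; [rewrite le_min a1 b1|rewrite ge_min a2].
Qed.

Definition hI (P : seq (X * R * R)) (g : X -> I) : I := mkI (hv P g).
Lemma iv_hI P g : iv (hI P g) = hv P g.
Proof. by rewrite iv_mkI cl01_id // hv_itv. Qed.

Lemma perfect_hI P : perfect (prod_opens X (I01_opens R)) (I01_opens R) (hI P).
Proof.
have [m _] := good_hv P.
apply: perfect_crit.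
- by move=> g g' le; rewrite !iv_hI; exact: m.
- move=> g t lt; exists (hv P); split; [exact: good_hv| by rewrite -iv_hI|].
  by move=> g'; rewrite iv_hI.
- move=> a; exists (fun _ g => hv P g + (- a)); split.
    by move=> _; exact: good_addc (good_hv P).
  by move=> g; rewrite iv_hI; split => [h _|/(_ 0%N) h]; lra.
Qed.

Lemma term_one (p : X * R * R) g : 0 < p.2 -> p.1.2 + p.2 < iv (g p.1.1) -> term p g = 1.
Proof.
move=> d0 lt; rewrite /term /dpos d0.
have -> : p.2^-1 * iv (g p.1.1) + - (p.1.2 / p.2) = (iv (g p.1.1) - p.1.2) / p.2.
  by rewrite mulrC mulrBl.
have h1 : 1 <= (iv (g p.1.1) - p.1.2) / p.2 by rewrite ler_pdivlMr // mul1r; lra.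
by rewrite /cl01 (min_r h1) (max_r ler01).
Qed.

Lemma term_pos (p : X * R * R) g : 0 < term p g -> p.1.2 < iv (g p.1.1).
Proof.
rewrite /term /cl01 lt_max ltxx /= lt_min ltr01 andbT.
have dp := dpos_gt0 p.2.
have -> : (dpos p.2)^-1 * iv (g p.1.1) + - (p.1.2 / dpos p.2) = (iv (g p.1.1) - p.1.2) / dpos p.2.
  by rewrite mulrC mulrBl.
move=> h; have := mulr_gt0 h dp; by rewrite divfK ?gt_eqF // subr_gt0.
Qed.

Lemma hv_one P g : (forall p, List.In p P -> 0 < p.2 /\ p.1.2 + p.2 < iv (g p.1.1)) -> hv P g = 1.
Proof.
elim: P => [|p P IH] //= h.
have [d0 lt] := h p (or_introl erefl).
by rewrite (term_one d0 lt) IH ?minxx // => q hq; exact: h q (or_intror hq).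
Qed.

Lemma hv_pos P g : 0 < hv P g -> forall p, List.In p P -> p.1.2 < iv (g p.1.1).
Proof.
elim: P => [|p P IH] //= h q [<-|hq].
  by apply: term_pos; move: h; rewrite lt_min => /andP[].
by apply: IH hq; move: h; rewrite lt_min => /andP[].
Qed.

End HFun.

Section Dia.
Context {R : realType} {Z : Type} (opZ : set (set Z)).
Local Notation I := (I01 R).

Lemma diamond_one (phi : Z -> I) (C : set Z) z : C z -> iv (phi z) = 1 ->
  iv (Diamond (Vdown_map (I01_opens R) phi C)) = 1.
Proof.
move=> Cz e; set E := (fun x : I => proj1_sig x) @` Vdown_map (I01_opens R) phi C.
have Ephi : E 1.
  exists (phi z) => //; exists (phi z); first by exists z.
  by move=> U _.
have ub : ubound E 1 by move=> _ [x _ <-]; exact: iv_le1.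
apply/eqP; rewrite eq_le; apply/andP; split.
  by apply: ge_sup => //; exists 1.
by apply: sup_upper_bound => //; split; [exists 1|exists 1].
Qed.

Lemma diamond_pos (phi : Z -> I) (C : set Z) :
  0 < iv (Diamond (Vdown_map (I01_opens R) phi C)) -> exists2 z, C z & 0 < iv (phi z).
Proof.
set E := (fun x : I => proj1_sig x) @` Vdown_map (I01_opens R) phi C.
move=> h; have E0 : E !=set0.
  apply: contrapT => nE; move: h; rewrite /= -/E.
  have -> : E = set0 by apply/seteqP; split => x // Ex; apply: nE; exists x.
  by rewrite sup0 ltxx.
have [y [x [w [z Cz <-] sxw] <-] y0] := sup_gt E0 h.
exists z => //; exact: lt_le_trans y0 (spec_I sxw).
Qed.

End Dia.
Section FData.
Context {R : realType} {X : Type}.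
Local Notation I := (I01 R).
Local Notation opZ := (prod_opens X (I01_opens R)).
Local Notation V := (Vdown opZ).

Definition Bhi (P : seq (X * R * R)) : set (X -> I) :=
  [set g | forall p, List.In p P -> p.1.2 + p.2 < iv (g p.1.1)].
Definition Blo (P : seq (X * R * R)) : set (X -> I) :=
  [set g | forall p, List.In p P -> p.1.2 < iv (g p.1.1)].
Definition valid (P : seq (X * R * R)) := forall p, List.In p P -> 0 < p.2.
Definition Whi (Q : seq (seq (X * R * R))) : set V :=
  [set C | forall P, List.In P Q -> proj1_sig C `&` Bhi P !=set0].
Definition Wlo (Q : seq (seq (X * R * R))) : set V :=
  [set C | forall P, List.In P Q -> proj1_sig C `&` Blo P !=set0].

Lemma Bhi_open P : opZ (Bhi P).
Proof.
apply: open_of_lists => g hg; exists (map (fun p => (p.1.1, p.1.2 + p.2)) P); split.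
  by move=> q /List.in_map_iff [p [<- Pp]] /=; exact: hg.
by move=> g' hg' p Pp; exact: (hg' _ (List.in_map (fun p => (p.1.1, p.1.2 + p.2)) _ _ Pp)).
Qed.

Lemma Whi_open Q : Vdown_opens opZ (Whi Q).
Proof.
move=> C hC.
exists ((fun P => [set C' : V | proj1_sig C' `&` Bhi P !=set0]) @` lset Q); split.
- exact/finite_image/finite_lset.
- move=> W [P QP <-]; exists (Bhi P); split => //; exact: Bhi_open.
- move=> W [P QP <-]; exact: hC.
- move=> C' hC' P QP; exact: (hC' _ (ex_intro2 _ _ P QP erefl)).
Qed.

Lemma local_data (C : V) (U : set (X -> I)) : opZ U -> proj1_sig C `&` U !=set0 ->
  exists P, [/\ valid P, proj1_sig C `&` Bhi P !=set0 & Blo P `<=` U].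
Proof.
move=> oU [z [Cz Uz]]; have [F' [fF' sF' gF' F'U]] := oU z Uz.
have [LF' hLF'] := finite_list fF'.
have hW : forall W', List.In W' LF' -> exists p : X * R * R,
    [/\ 0 < p.2, p.1.2 + p.2 < iv (z p.1.1) & forall g, p.1.2 < iv (g p.1.1) -> W' g].
  move=> W' /(hLF' W').2 FW'; have [x [W [[Wup Wop] eW]]] := sF' W' FW'.
  have := gF' W' FW'; rewrite eW /= => Wz; have [e e0 he] := Wop _ Wz.
  exists (x, iv (z x) - e, e / 2); split => /=; [by rewrite divr_gt0|lra|].
  move=> g hg; case: (leP (iv (z x)) (iv (g x))) => c; first exact: Wup _ _ Wz c.
  apply: he; change (`|iv (g x) - iv (z x)| < e).
  by rewrite ltr_norml; apply/andP; split; lra.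
have [M [hM1 hM2]] := list_choice hW.
exists M; split.
- by move=> p /hM1 [W' _ []].
- by exists z; split => // p /hM1 [W' _ []].
- move=> g hg; apply: F'U => W' FW'.
  have [p Mp [_ _ hp]] := hM2 W' ((hLF' W').1 FW'); exact: hp (hg p Mp).
Qed.

Lemma approx_data (f : V -> I) : perfect (Vdown_opens opZ) (I01_opens R) f ->
  forall t t' : R, t' < t ->
  exists QQ : seq (seq (seq (X * R * R))),
   [/\ (forall Q, List.In Q QQ -> forall P, List.In P Q -> valid P),
       (forall C, t <= iv (f C) -> exists2 Q, List.In Q QQ & Whi Q C) &
       (forall Q, List.In Q QQ -> forall C, Wlo Q C -> t' < iv (f C))].
Proof.
move=> [fcont fcs] t t' tt.
have cK := (fcs _ (lev_I01 t).1 (lev_I01 t).2).1.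
have oO := fcont _ (I_up t').
pose G := [set W : set V | exists Q, [/\ (forall P, List.In P Q -> valid P),
            (forall C, Wlo Q C -> t' < iv (f C)) & W = Whi Q]].
have Gop : G `<=` Vdown_opens opZ by move=> W [Q [_ _ ->]]; exact: Whi_open.
have Gcov : f @^-1` [set x : I | t <= iv x] `<=` \bigcup_(W in G) W.
  move=> C /= hC; have OC : (f @^-1` [set x : I | t' < iv x]) C by rewrite /=; lra.
  have [F [fF sF gF FU]] := oO C OC.
  have [LF hLF] := finite_list fF.
  have hV : forall W, List.In W LF -> exists P, [/\ valid P,
      proj1_sig C `&` Bhi P !=set0 & forall C' : V, proj1_sig C' `&` Blo P !=set0 -> W C'].
    move=> W /(hLF W).2 FW; have [U [oU eW]] := sF W FW.
    have := gF W FW; rewrite eW /= => CU.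
    have [P [vP hP1 hP2]] := local_data oU CU.
    exists P; split => // C' [g [C'g hg]]; exists g; split => //; exact: hP2.
  have [Q [hQ1 hQ2]] := list_choice hV.
  exists (Whi Q).
    exists Q; split.
    - by move=> P /hQ1 [W _ []].
    - move=> C' hC'; apply: FU => W FW.
      have [P QP [_ _ hP]] := hQ2 W ((hLF W).1 FW); exact: hP (hC' P QP).
    - by [].
  by move=> P /hQ1 [W _ []].
have [G' [fG' sG' cG']] := cK G Gop Gcov.
have [LG hLG] := finite_list fG'.
have hW : forall W, List.In W LG -> exists Q, [/\ (forall P, List.In P Q -> valid P),
            (forall C, Wlo Q C -> t' < iv (f C)) & W = Whi Q].
  by move=> W /(hLG W).2 /sG'.
have [QQ [hQQ1 hQQ2]] := list_choice hW.
exists QQ; split.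
- by move=> Q /hQQ1 [W _ []].
- move=> C hC; have [W G'W WC] := cG' C hC.
  have [Q QQQ [_ _ eW]] := hQQ2 W ((hLG W).1 G'W).
  by exists Q => //; rewrite -eW.
- by move=> Q /hQQ1 [W _ []].
Qed.

End FData.
Section Folds.
Context {R : realType}.
Local Notation I := (I01 R).

Definition Fmax (F : nat -> R) (l : seq nat) : R := foldr (fun i acc => Num.max (F i) acc) 0 l.
Definition Fmin (F : nat -> R) (l : seq nat) : R := foldr (fun i acc => Num.min (F i) acc) 1 l.

Lemma Fmax_ge F l i : List.In i l -> F i <= Fmax F l.
Proof.
elim: l => [|j l IH] //= [<-|h]; first by rewrite le_max lexx.
by rewrite le_max (IH h) orbT.
Qed.
Lemma Fmax_ge0 F l : 0 <= Fmax F l.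
Proof. by elim: l => [|j l IH] //=; rewrite le_max IH orbT. Qed.
Lemma Fmax_lt F l b : 0 < b -> (forall i, List.In i l -> F i < b) -> Fmax F l < b.
Proof.
move=> b0; elim: l => [|j l IH] h //=.
by rewrite gt_max (h j (or_introl erefl)) IH // => i hi; exact: h i (or_intror hi).
Qed.
Lemma Fmax_le F l b : 0 <= b -> (forall i, List.In i l -> F i <= b) -> Fmax F l <= b.
Proof.
move=> b0; elim: l => [|j l IH] h //=.
by rewrite ge_max (h j (or_introl erefl)) IH // => i hi; exact: h i (or_intror hi).
Qed.
Lemma Fmax_pos F l : 0 < Fmax F l -> exists2 i, List.In i l & 0 < F i.
Proof.
elim: l => [|j l IH] /=; first by rewrite ltxx.
rewrite lt_max => /orP[h|/IH [i hi hF]]; first by exists j => //; left.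
by exists i => //; right.
Qed.
Lemma Fmin_le1 F l : Fmin F l <= 1.
Proof. by elim: l => [|j l IH] //=; rewrite ge_min IH orbT. Qed.
Lemma Fmin_ge F l b : b <= 1 -> (forall i, List.In i l -> b <= F i) -> b <= Fmin F l.
Proof.
move=> b1; elim: l => [|j l IH] h //=.
by rewrite le_min (h j (or_introl erefl)) IH // => i hi; exact: h i (or_intror hi).
Qed.
Lemma Fmin_pos F l : 0 < Fmin F l -> forall i, List.In i l -> 0 < F i.
Proof.
elim: l => [|j l IH] //= h i [<-|hi]; first by move: h; rewrite lt_min => /andP[].
by apply: IH hi; move: h; rewrite lt_min => /andP[].
Qed.

Lemma good_Fmax {Y : Type} (F : nat -> (Y -> I) -> R) l :
  (forall i, good (F i)) -> good (fun g => Fmax (fun i => F i g) l).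
Proof.
move=> gF; elim: l => [|j l IH] /=; first exact: good_cst.
exact: good_max (gF j) IH.
Qed.
Lemma good_Fmin {Y : Type} (F : nat -> (Y -> I) -> R) l :
  (forall i, good (F i)) -> good (fun g => Fmin (fun i => F i g) l).
Proof.
move=> gF; elim: l => [|j l IH] /=; first exact: good_cst.
exact: good_min (gF j) IH.
Qed.

Lemma In_mem {T : eqType} (s : seq T) (x : T) : List.In x s <-> x \in s.
Proof.
elim: s => [|a s IH]; first by split.
rewrite in_cons /=; split.
  by case => [->|/IH ->]; rewrite ?eqxx ?orbT.
by case/orP => [/eqP ->|/IH h]; [left|right].
Qed.

Lemma In_iota a n i : List.In i (iota a n) <-> (a <= i < a + n)%N.
Proof. by rewrite In_mem mem_iota. Qed.

Lemma In_nth {T : Type} (x0 : T) (s : seq T) x : List.In x s ->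
  exists2 i, (i < size s)%N & nth x0 s i = x.
Proof.
elim: s => [|a s IH] //= [<-|h]; first by exists 0%N.
by have [i hi <-] := IH h; exists i.+1.
Qed.
Lemma nth_In {T : Type} (x0 : T) (s : seq T) i : (i < size s)%N -> List.In (nth x0 s i) s.
Proof.
elim: s i => [|a s IH] [|i] //= h; first by left.
by right; apply: IH.
Qed.

Definition e (n : nat) : R := ((2:R) ^+ n)^-1.
Lemma e_gt0 n : 0 < e n. Proof. by rewrite /e invr_gt0 exprn_gt0. Qed.
Lemma eS n : e n.+1 = e n / 2.
Proof. by rewrite /e exprS invfM mulrC. Qed.

Lemma e_small (x : R) : 0 < x -> exists n, e n < x.
Proof.
move=> x0; have xi : 0 <= x^-1 by rewrite invr_ge0 ltW.
have /andP[_ h] := trunc_itv xi.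
set n := Num.trunc x^-1 in h.
exists n; rewrite /e -[_^-1]mul1r ltr_pdivrMr ?exprn_gt0 //.
have h2 : (n.+1%:R : R) <= (2:R) ^+ n by rewrite -natrX ler_nat; exact: ltn_expl.
have xx : x * x^-1 = 1 by rewrite divff ?gt_eqF.
have h3 : x^-1 < (2:R) ^+ n by exact: lt_le_trans h h2.
nra.
Qed.

Lemma eps_le (a b : R) : (forall n, a <= b + 4 * e n) -> a <= b.
Proof.
move=> h; rewrite leNgt; apply/negP => ba.
have p : 0 < (a - b) / 4 by rewrite divr_gt0 // subr_gt0.
have [n hn] := e_small p.
have := h n; lra.
Qed.

End Folds.
Section LimitS.
Context {R : realType} {Y : Type} (A : nat -> (Y -> I01 R) -> R).
Local Notation I := (I01 R).
Hypothesis gA : forall n, good (A n).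
Hypothesis A01 : forall n g, 0 <= A n g <= 1.

Fixpoint sp (n : nat) (g : Y -> I) : R :=
  match n with
  | 0 => A 0 g
  | m.+1 => Num.max (sp m g - e m) (Num.min (A m.+1 g) (sp m g + e m))
  end.

Lemma sp_itv n g : 0 <= sp n g <= 1.
Proof.
elim: n => [|n IH] /=; first exact: A01.
have := A01 n.+1 g; have := e_gt0 (R:=R) n; move: IH => /andP[a1 a2] en /andP[b1 b2].
apply/andP; split.
  by rewrite le_max le_min b1 /=; apply/orP; right; lra.
by rewrite ge_max ge_min b2 /= andbT; lra.
Qed.

Lemma sp_step n g : sp n g - e n <= sp n.+1 g <= sp n g + e n.
Proof.
rewrite /=; have := e_gt0 (R:=R) n => en.
by apply/andP; split; [rewrite le_max lexx|rewrite ge_max ge_min lexx orbT andbT]; lra.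
Qed.

Lemma good_sp n : good (sp n).
Proof.
elim: n => [|n IH] /=; first exact: gA.
apply: good_max; first exact: good_addc.
by apply: good_min; [exact: gA|exact: good_addc].
Qed.

Definition vv n g := sp n g - 2 * e n.
Definition ww n g := sp n g + 2 * e n.

Lemma good_vv n : good (vv n). Proof. exact: good_addc (good_sp n). Qed.
Lemma good_ww n : good (ww n). Proof. exact: good_addc (good_sp n). Qed.

Lemma vv_mono m n g : (m <= n)%N -> vv m g <= vv n g.
Proof.
elim: n => [|n IH] mn; first by move: mn; rewrite leqn0 => /eqP ->.
move: mn; rewrite leq_eqVlt => /orP[/eqP ->//|/IH h].
apply: le_trans h _; rewrite /vv eS; have := sp_step n g; move=> /andP[s1 s2].
have := e_gt0 (R:=R) n; lra.
Qed.
Lemma ww_anti m n g : (m <= n)%N -> ww n g <= ww m g.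
Proof.
elim: n => [|n IH] mn; first by move: mn; rewrite leqn0 => /eqP ->.
move: mn; rewrite leq_eqVlt => /orP[/eqP ->//|/IH h].
apply: le_trans _ h; rewrite /ww eS; have := sp_step n g; move=> /andP[s1 s2].
have := e_gt0 (R:=R) n; lra.
Qed.
Lemma vv_le_ww m n g : vv m g <= ww n g.
Proof.
apply: le_trans (vv_mono g (leq_maxl m n)) _.
apply: le_trans _ (ww_anti g (leq_maxr m n)).
rewrite /vv /ww; have := e_gt0 (R:=R) (maxn m n); lra.
Qed.

Definition sval g := sup (range (fun n => vv n g)).

Lemma sval_has g : has_sup (range (fun n => vv n g)).
Proof. split; first by exists (vv 0 g), 0%N. by exists (ww 0 g) => _ [n _ <-]; exact: vv_le_ww. Qed.

Lemma vv_le_s n g : vv n g <= sval g.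
Proof. by apply: sup_upper_bound (sval_has g) _ _; exists n. Qed.
Lemma s_le_ww n g : sval g <= ww n g.
Proof. by apply: ge_sup; [exists (vv 0 g), 0%N | move=> _ [m _ <-]; exact: vv_le_ww]. Qed.

Lemma sval_itv g : 0 <= sval g <= 1.
Proof.
apply/andP; split.
  apply: eps_le => n; have := vv_le_s n g; have := sp_itv n g; have := e_gt0 (R:=R) n.
  rewrite /vv => en /andP[a1 a2] h; lra.
apply: eps_le => n; have := s_le_ww n g; have := sp_itv n g; have := e_gt0 (R:=R) n.
rewrite /ww => en /andP[a1 a2] h; lra.
Qed.

Definition sI (g : Y -> I) : I := exist _ (sval g) (sval_itv g).

Lemma perfect_sI : perfect (prod_opens Y (I01_opens R)) (I01_opens R) sI.
Proof.
apply: perfect_crit.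
- move=> g g' le; apply: ge_sup; first by exists (vv 0 g), 0%N.
  move=> _ [n _ <-]; apply: le_trans (vv_le_s n g'); exact: (proj1 (good_vv n)) _ _ le.
- move=> g t lt.
  have lt' : t < sval g by [].
  have ne : range (fun n => vv n g) !=set0 by exists (vv 0 g), 0%N.
  have [_ [n _ <-] tn] := sup_gt ne lt'.
  exists (vv n); split => //; first exact: good_vv.
  by move=> g'; exact: vv_le_s.
- move=> a; exists (fun n g => ww n g + (- a)); split.
    by move=> n; exact: good_addc (good_ww n).
  move=> g; split => [h n|h].
    have h' : a <= sval g := h.
    have := s_le_ww n g; lra.
  change (a <= sval g); apply: eps_le => n.
  have := h n; have := vv_le_s n g; rewrite /vv /ww; lra.
Qed.

Lemma sI_exact g (F : R) : (forall n, `|A n g - F| < e n / 4) -> iv (sI g) = F.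
Proof.
move=> h.
have spA : forall n, sp n g = A n g.
  elim => [|n IH] //=; rewrite IH.
  have := h n; have := h n.+1; rewrite eS !ltr_norml => /andP[a1 a2] /andP[b1 b2].
  have en := e_gt0 (R:=R) n.
  have l1 : A n.+1 g <= A n g + e n by lra.
  have l2 : A n g - e n <= A n.+1 g by lra.
  by rewrite (min_l l1) (max_r l2).
change (sval g = F); apply/eqP; rewrite eq_le; apply/andP; split.
  apply: eps_le => n; have := s_le_ww n g; have := h n; rewrite /ww spA ltr_norml.
  have := e_gt0 (R:=R) n; move=> en /andP[a1 a2] hh; lra.
apply: eps_le => n; have := vv_le_s n g; have := h n; rewrite /vv spA ltr_norml.
have := e_gt0 (R:=R) n; move=> en /andP[a1 a2] hh; lra.
Qed.

End LimitS.
Section Approx.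
Context {R : realType} {X : Type}.
Local Notation I := (I01 R).
Local Notation opZ := (prod_opens X (I01_opens R)).
Local Notation V := (Vdown opZ).
Local Notation Yt := ((nat * nat) * (nat * nat))%type.

Definition Nn (n : nat) : nat := (2 ^ n.+2)%N.
Definition tk n k : R := k%:R / (Nn n)%:R.
Definition tk' n k : R := (k%:R - 1) / (Nn n)%:R.

Lemma Nn_pos n : (0 : R) < (Nn n)%:R.
Proof. by rewrite ltr0n /Nn expn_gt0. Qed.
Lemma Nn_inv n : ((Nn n)%:R : R)^-1 = e n / 4.
Proof.
rewrite /Nn natrX /e !exprS -[(2:R) * _]/(2 * (2 * 2 ^+ n)) mulrA.
have -> : (2 : R) * 2 = 4 by rewrite -natrM.
by rewrite invfM mulrC.
Qed.
Lemma tk_lt n k : tk' n k < tk n k.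
Proof.
rewrite /tk /tk' ltr_pM2r ?invr_gt0 ?Nn_pos //; lra.
Qed.

Context (f : V -> I) (D : nat * nat -> seq (seq (seq (X * R * R)))).
Hypothesis hD : forall nk : nat * nat,
  [/\ (forall Q, List.In Q (D nk) -> forall P, List.In P Q -> valid P),
      (forall C, tk nk.1 nk.2 <= iv (f C) -> exists2 Q, List.In Q (D nk) & Whi Q C) &
      (forall Q, List.In Q (D nk) -> forall C, Wlo Q C -> tk' nk.1 nk.2 < iv (f C))].

Definition Pnth (y : Yt) := nth [::] (nth [::] (D y.1) y.2.1) y.2.2.
Definition hh (y : Yt) : (X -> I) -> I := hI (Pnth y).
Definition cf n k (uu : Yt -> I) : R :=
  Fmax (fun j => Fmin (fun i => iv (uu ((n, k), (j, i))))
     (iota 0 (size (nth [::] (D (n, k)) j)))) (iota 0 (size (D (n, k)))).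
Definition Afun n (uu : Yt -> I) : R := Fmax (fun k => tk n k * cf n k uu) (iota 1 (Nn n)).

Lemma tk_ge0 n k : 0 <= tk n k.
Proof. by rewrite /tk divr_ge0 // ltW // Nn_pos. Qed.

Lemma good_cf n k : good (cf n k).
Proof. apply: good_Fmax => j; apply: good_Fmin => i; exact: good_coord. Qed.
Lemma good_Afun n : good (Afun n).
Proof. apply: good_Fmax => k; apply: good_scale; [exact: tk_ge0|exact: good_cf]. Qed.

Lemma cf_itv n k uu : 0 <= cf n k uu <= 1.
Proof.
apply/andP; split; first exact: Fmax_ge0.
apply: Fmax_le => // j _; exact: Fmin_le1.
Qed.

Lemma Afun_itv n uu : 0 <= Afun n uu <= 1.
Proof.
apply/andP; split; first exact: Fmax_ge0.
apply: Fmax_le => // k /In_iota /andP[k1 k2].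
have kN : tk n k <= 1.
  rewrite /tk ler_pdivrMr ?Nn_pos // mul1r ler_nat.
  by move: k2; rewrite add1n ltnS.
have := tk_ge0 n k; have /andP[c0 c1] := cf_itv n k uu; nra.
Qed.

Definition uC (C : V) : Yt -> I := fun y => Diamond (Vdown_map (I01_opens R) (hh y) (proj1_sig C)).

Lemma approx n C : `|Afun n (uC C) - iv (f C)| < e n / 4.
Proof.
have Np := Nn_pos n; rewrite -Nn_inv.
set F := iv (f C); set Nr := ((Nn n)%:R : R).
have F0 : 0 <= F := iv_ge0 _. have F1 : F <= 1 := iv_le1 _.
have Ni : 0 < Nr^-1 by rewrite invr_gt0.
rewrite ltr_norml; apply/andP; split.
-
  have FN : 0 <= F * Nr by rewrite mulr_ge0 // ltW.
  have /andP[t1 t2] := trunc_itv FN.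
  set k := Num.trunc (F * Nr) in t1 t2.
  have hk : F - Nr^-1 < k%:R / Nr.
    rewrite ltr_pdivlMr // mulrBl mulVf ?gt_eqF //.
    by move: t2; rewrite -addn1 natrD; lra.
  case: (posnP k) => [k0|kpos].
    have : F - Nr^-1 < 0 by move: hk; rewrite k0 mul0r.
    by move=> h; have /andP[a0 _] := Afun_itv n (uC C); lra.
  have kN : (k <= Nn n)%N.
    rewrite -(ler_nat R); apply: le_trans t1 _.
    by rewrite -[X in _ <= X]mul1r ler_pM2r.
  have tkF : tk n k <= F.
    by rewrite /tk ler_pdivrMr.
  have [hD1 hD2 _] := hD (n, k).
  have [Q DQ WQ] := hD2 C tkF.
  have [j jQ eQ] := In_nth [::] DQ.
  have cf1 : 1 <= cf n k (uC C).
    apply: le_trans (Fmax_ge _ ((In_iota 0 _ j).2 _)); last by rewrite add0n.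
    apply: Fmin_ge => // i /In_iota /andP[_]; rewrite add0n => iQ.
    rewrite eQ in iQ.
    have PQ := nth_In [::] iQ.
    have [z [Cz Bz]] := WQ _ PQ.
    suff -> : iv (uC C ((n, k), (j, i))) = 1 by [].
    apply: (diamond_one (z := z)) => //.
    rewrite /hh iv_hI /Pnth /= eQ; apply: hv_one => p Pp; split; last exact: Bz.
    exact: hD1 Q DQ _ PQ p Pp.
  have : tk n k <= Afun n (uC C).
    apply: le_trans (Fmax_ge _ ((In_iota 1 _ k).2 _)); last by rewrite kpos add1n ltnS.
    have := tk_ge0 n k; nra.
  rewrite /tk -/Nr; lra.
-
  rewrite ltrBlDl; apply: Fmax_lt; first lra.
  move=> k /In_iota /andP[k1 k2].
  have /andP[c0 c1] := cf_itv n k (uC C).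
  have t0 := tk_ge0 n k.
  case: (lerP (cf n k (uC C)) 0) => c.
    have : tk n k * cf n k (uC C) <= 0 by nra.
    lra.
  have [j /In_iota /andP[_]] := Fmax_pos c; rewrite add0n => jD hj.
  set Q := nth [::] (D (n, k)) j.
  have DQ : List.In Q (D (n, k)) by exact: nth_In.
  have WQ : Wlo Q C.
    move=> P /(In_nth [::]) [i iQ <-].
    have := Fmin_pos hj ((In_iota 0 _ i).2 _); rewrite add0n => /(_ iQ).
    move=> /diamond_pos [z Cz hz]; exists z; split => //.
    move: hz; rewrite /hh iv_hI /Pnth /= -/Q => /hv_pos h p Pp; exact: h p Pp.
  have [_ _ hD3] := hD (n, k).
  have := hD3 Q DQ C WQ; rewrite /tk' /tk -/F -/Nr.
  rewrite mulrBl => lt.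
  have : tk n k * cf n k (uC C) <= tk n k by nra.
  rewrite /tk -/Nr; lra.
Qed.

End Approx.

Unset Implicit Arguments.

Theorem theorem5p18 (R : realType) (X : Type)
  (f : Vdown (prod_opens X (I01_opens R)) -> I01 R) :
  perfect (Vdown_opens (prod_opens X (I01_opens R))) (I01_opens R) f ->
  exists (Y : Type) (s : (Y -> I01 R) -> I01 R)
         (h : Y -> (X -> I01 R) -> I01 R),
    [/\ countable [set: Y],
        perfect (prod_opens Y (I01_opens R)) (I01_opens R) s,
        (forall y, perfect (prod_opens X (I01_opens R)) (I01_opens R) (h y)) &
        forall C, f C =
          s (fun y => Diamond (Vdown_map (I01_opens R) (h y) (proj1_sig C)))].
Proof.
move=> hf.
have [D hD] := choice (fun nk : nat * nat => approx_data hf (tk_lt (R:=R) nk.1 nk.2)).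
exists ((nat * nat) * (nat * nat))%type.
exists (sI (@Afun_itv R X D)).
exists (hh D); split.
- exact: countableP.
- apply: perfect_sI => n; exact: good_Afun.
- by move=> y; exact: perfect_hI.
- move=> C; apply: iv_inj; symmetry.
  apply: sI_exact => n; exact: approx hD n C.
Qed.
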